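(* Let $\mathcal C$ be an EACP over $\mathbb R$ with natural basis $\{h_1,\dots,h_n,r\}$ and matrix of structural constants $M=A\oplus\mathbf b$, and suppose $\operatorname{rank}A=n$. Then every evolution subalgebra $\mathcal C_1$ of $\mathcal C$ is of the form $\mathcal C_1=\operatorname{span}\{f_1,\dots,f_m,ar\}$ for some $0\le m\le n$, $a\in\{0,1\}$ and vectors $f_i=\sum_{j=1}^n\alpha_{ij}h_j$ with $\alpha_{ij}\in\mathbb R$, $i=1,\dots,m$.
   Context: An EACP over a field $K$ is a $K$-algebra with a basis $\{h_1,\dots,h_n,r\}$ (natural basis) such that $h_ir=rh_i=\sum_{j=1}^n a_{ij}h_j+b_ir$, $h_ih_j=0$ for all $i,j$, and $rr=0$; its matrix of structural constants is $M=A\oplus\mathbf b$ with $A=(a_{ij})_{i,j=1}^n$, $\mathbf b=(b_1,\dots,b_n)^T$. An evolution subalgebra of $\mathcal C$ is a linear subspace $\mathcal C_1$ which itself has a basis $\{h'_1,\dots,h'_k,r'\}$ with a multiplication table of the same form, i.e. $h'_ih'_j=0$, $r'r'=0$, and $h'_ir'=r'h'_i=\sum_j a'_{ij}h'_j+b'_ir'$ for some scalars $a'_{ij},b'_i$. *)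

(* Defs.v *)
From HB Require Import structures.
From mathcomp Require Import all_boot all_order all_algebra.
From mathcomp Require Import reals.
Set Implicit Arguments. Unset Strict Implicit. Unset Printing Implicit Defensive.
Import Order.TTheory GRing.Theory Num.Theory.
Local Open Scope ring_scope.

(* Elements of the EACP C are coordinate row vectors in 'rV[R]_(n+1) w.r.t. the
   natural basis {h_1,...,h_n, r}: coordinate [lshift 1 j] is h_j, coordinate
   [rshift n ord0] is r. *)

Definition hvec (R : realType) (n : nat) (j : 'I_n) : 'rV[R]_(n + 1) :=
  delta_mx 0 (lshift 1 j).

Definition rvec (R : realType) (n : nat) : 'rV[R]_(n + 1) :=
  delta_mx 0 (rshift n (ord0 : 'I_1)).

(* Multiplication table of the natural basis: M = A (+) b = row_mx A b,
   h_i r = r h_i = sum_j a_ij h_j + b_i r  (= row i of M), h_i h_j = 0, r r = 0. *)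
Definition eacp_table (R : realType) (n : nat) (A : 'M[R]_n) (b : 'cV[R]_n)
    (p q : 'I_(n + 1)) : 'rV[R]_(n + 1) :=
  match split p, split q with
  | inl i, inr _ => row i (row_mx A b)
  | inr _, inl i => row i (row_mx A b)
  | _, _ => 0
  end.

Definition eacp_mul (R : realType) (n : nat) (A : 'M[R]_n) (b : 'cV[R]_n)
    (x y : 'rV[R]_(n + 1)) : 'rV[R]_(n + 1) :=
  \sum_(p < n + 1) \sum_(q < n + 1) (x 0 p * y 0 q) *: eacp_table A b p q.

Definition is_evolution_subalgebra (R : realType) (n : nat) (A : 'M[R]_n)
    (b : 'cV[R]_n) (C1 : {vspace 'rV[R]_(n + 1)}) : Prop :=
  exists (k : nat) (hp : 'I_k -> 'rV[R]_(n + 1)) (rp : 'rV[R]_(n + 1))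
         (A' : 'M[R]_k) (b' : 'cV[R]_k),
    [/\ basis_of C1 (rcons [seq hp i | i <- enum 'I_k] rp),
        (forall i j, eacp_mul A b (hp i) (hp j) = 0),
        eacp_mul A b rp rp = 0,
        (forall i, eacp_mul A b (hp i) rp = \sum_(j < k) A' i j *: hp j + b' i 0 *: rp)
      & (forall i, eacp_mul A b rp (hp i) = \sum_(j < k) A' i j *: hp j + b' i 0 *: rp)].

(* Main.v *)
Require Import Defs.
From HB Require Import structures.
From mathcomp Require Import all_boot all_order all_algebra.
From mathcomp Require Import reals.
From mathcomp Require Import lra zify.
Import Order.TTheory GRing.Theory Num.Theory.
Local Open Scope ring_scope.

Section Aux.
Variables (R : realType) (n : nat) (A : 'M[R]_n) (b : 'cV[R]_n).
Let rl : 'I_(n+1) := rshift n (ord0 : 'I_1).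

Lemma tab_ll i j : eacp_table A b (lshift 1 i) (lshift 1 j) = 0.
Proof. by rewrite /eacp_table (unsplitK (inl _ i)) (unsplitK (inl _ j)). Qed.
Lemma tab_lr i j : eacp_table A b (lshift 1 i) (rshift n j) = row i (row_mx A b).
Proof. by rewrite /eacp_table (unsplitK (inl _ i)) (unsplitK (inr _ j)). Qed.
Lemma tab_rl i j : eacp_table A b (rshift n j) (lshift 1 i) = row i (row_mx A b).
Proof. by rewrite /eacp_table (unsplitK (inl _ i)) (unsplitK (inr _ j)). Qed.
Lemma tab_rr i j : eacp_table A b (rshift n i) (rshift n j) = 0.
Proof. by rewrite /eacp_table (unsplitK (inr _ i)) (unsplitK (inr _ j)). Qed.

Lemma mul_formula x y : eacp_mul A b x y =
  (y 0 rl *: lsubmx x + x 0 rl *: lsubmx y) *m row_mx A b.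
Proof.
rewrite /eacp_mul big_split_ord /= big_ord1.
under eq_bigr do rewrite big_split_ord /= big_ord1.
rewrite big_split_ord /= big_ord1.
under eq_bigr do rewrite tab_lr.
under eq_bigr do under eq_bigr do rewrite tab_ll.
under [X in _ + (X + _)]eq_bigr do rewrite tab_rl.
rewrite tab_rr scaler0 addr0.
rewrite (eq_bigr (fun i => (x 0 (lshift 1 i) * y 0 rl) *: row i (row_mx A b))); last first.
  by move=> i _; rewrite big1 ?add0r // => j _; rewrite scaler0.
rewrite mulmxDl -!scalemxAl !mulmx_sum_row !scaler_sumr.
congr (_ + _); apply: eq_bigr => i _; rewrite scalerA !mxE; congr (_ *: _).
  by rewrite mulrC.
Qed.

Lemma lr_neq i : (lshift 1 i == rshift n (ord0 : 'I_1)) = false.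
Proof. by apply/negbTE; rewrite -val_eqE /= neq_ltn ltn_addr. Qed.

Lemma sq0 x : \rank A = n -> eacp_mul A b x x = 0 ->
  x 0 rl = 0 \/ x = x 0 rl *: rvec R n.
Proof.
move=> rk; rewrite mul_formula mul_mx_row => /eqP; rewrite row_mx_eq0 => /andP[/eqP h _].
have uA : A \in unitmx by rewrite -row_free_unit /row_free rk.
have : (x 0 rl *: lsubmx x + x 0 rl *: lsubmx x) = 0.
  by rewrite -[LHS](mulmxK uA) h mul0mx.
rewrite -scalerDl => /eqP; rewrite scaler_eq0 => /orP[/eqP h2|/eqP h2].
  by left; lra.
right; apply/rowP => k; rewrite !mxE; case: (splitP k) => [j kj|j kj];
  [have -> : k = lshift 1 j by apply: val_inj | have -> : k = rshift n j by apply: val_inj].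
  rewrite (_ : (0 == 0) && _ = false) ?mulr0; last by rewrite lr_neq andbF.
  by have := congr1 (fun M : 'rV[R]_n => M 0 j) h2; rewrite !mxE.
by rewrite ord1 !eqxx mulr1.
Qed.

Lemma rvec_rl : rvec R n 0 rl = 1.
Proof. by rewrite !mxE !eqxx. Qed.

Lemma decomp (v : 'rV[R]_(n+1)) : v 0 rl = 0 -> v = \sum_j v 0 (lshift 1 j) *: hvec R j.
Proof.
move=> hv; apply/matrixP => i0 k; rewrite ord1 summxE; case: (splitP k) => [j kj|j kj];
  [have -> : k = lshift 1 j by apply: val_inj | have -> : k = rshift n j by apply: val_inj].
  rewrite (bigD1 j) //= big1 ?addr0 => [|i /negbTE ij]; rewrite !mxE.
    by rewrite !eqxx mulr1.
  by rewrite (inj_eq (@lshift_inj _ _)) eq_sym ij andbF mulr0.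
rewrite (ord1 j) hv big1 // => i _; rewrite !mxE.
by rewrite eq_sym lr_neq andbF mulr0.
Qed.

Lemma span_P (X : seq 'rV[R]_(n+1)) v : (forall x, x \in X -> x 0 rl = 0) ->
  v \in <<X>>%VS -> v 0 rl = 0.
Proof.
move=> hX; rewrite -[X]/(tval (in_tuple X)) => /coord_span ->.
rewrite summxE big1 // => i _; rewrite mxE hX ?mulr0 //.
by apply: mem_nth; exact: ltn_ord.
Qed.
End Aux.
Arguments decomp {R n v}. Arguments sq0 {R n A b x}. Arguments span_P {R n X v}. Arguments rvec_rl {R n}.

Theorem proposition4p4 (R : realType) (n : nat) (A : 'M[R]_n) (b : 'cV[R]_n)
    (C1 : {vspace 'rV[R]_(n + 1)}) :
  \rank A = n ->
  is_evolution_subalgebra A b C1 ->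
  exists m : nat, (m <= n)%N /\
  exists a : R, (a = 0 \/ a = 1) /\
  exists alpha : 'M[R]_(m, n),
    C1 = <<rcons [seq (\sum_(j < n) alpha i j *: hvec R j)%R | i <- enum 'I_m]
                 (a *: rvec R n)%R>>%VS.
Proof.
move=> rk [k [hp [rp [A' [b' [bas hh rr _ _]]]]]].
set L := rcons [seq hp i | i <- enum 'I_k] rp.
have sqL : forall x, x \in L -> eacp_mul A b x x = 0.
  move=> x; rewrite mem_rcons in_cons => /orP[/eqP -> //| /mapP[i _ ->]]; exact: hh.
set rl := rshift n (ord0 : 'I_1).
pose P := fun x : 'rV[R]_(n+1) => x 0 rl == 0.
have frL := basis_free bas.
have spL := span_basis bas.
have hd : \dim (fullv : {vspace 'rV[R]_(n+1)}) = n.+1.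
  by rewrite dimvf dim_matrix mul1r addn1.
have dimL : (size L <= n.+1)%N.
  rewrite -(eqP frL) -hd; exact: dimvS (subvf _).
set s := filter P L.
have hs : forall x, x \in s -> x 0 rl = 0 by move=> x; rewrite mem_filter => /andP[/eqP].
have sL : forall x, x \in s -> x \in L by move=> x; rewrite mem_filter => /andP[].
pose alpha := \matrix_(i < size s, j < n) s`_i 0 (lshift 1 j).
pose f := fun i : 'I_(size s) => \sum_(j < n) alpha i j *: hvec R j.
have fE : forall i, f i = s`_i.
  move=> i; rewrite [RHS](decomp (hs _ (mem_nth 0 (ltn_ord i)))).
  by apply: eq_bigr => j _; rewrite mxE.
have sf : forall x, x \in s -> x \in [seq f i | i <- enum 'I_(size s)].
  move=> x xs; apply/mapP; have xi : (index x s < size s)%N by rewrite index_mem.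
  exists (Ordinal xi).
    by rewrite mem_enum.
  by rewrite fE /= nth_index.
have fs : forall i, f i \in s by move=> i; rewrite fE mem_nth.
exists (size s).
case: (boolP (has (predC P) L)) => hasN.
  split.
    have := count_predC P L; rewrite has_count in hasN.
    rewrite /s size_filter; move: hasN dimL; lia.
  exists 1; split; first by right.
  exists alpha; rewrite scale1r -spL; apply/eqP; rewrite eqEsubv; apply/andP; split;
    apply/span_subvP => x xin.
    case: (boolP (P x)) => Px.
      apply: memv_span; rewrite mem_rcons in_cons; apply/orP; right.
      by apply: sf; rewrite mem_filter Px.
    have [//|xe] := sq0 rk (sqL _ xin); first by move/eqP: Px.
    rewrite xe; apply: memvZ; apply: memv_span; by rewrite mem_rcons mem_head.
  move: xin; rewrite mem_rcons in_cons => /orP[/eqP ->|/mapP[i _ ->]].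
    have [y yL Py] := hasP hasN.
    have [//|ye] := sq0 rk (sqL _ yL); first by move: Py => /= /negP; rewrite /P => h /eqP.
    have nz : y 0 rl != 0 by [].
    rewrite (_ : rvec R n = (y 0 rl)^-1 *: y); last by rewrite {2}ye scalerA mulVf // scale1r.
    by apply: memvZ; apply: memv_span.
  by apply: memv_span; apply: sL; apply: fs.
have allL : all P L.
  by apply/allP => x xL; apply/negPn; apply: (hasPn hasN).
have sLe : s = L by apply/all_filterP.
have szL : (size L <= n)%N.
  rewrite leqNgt; apply/negP => hlt.
  have eqL : (<<L>> = fullv)%VS.
    apply/eqP; rewrite eqEdim subvf /= hd (eqP frL).
    exact: hlt.
  have := span_P (X := L) (v := rvec R n).
  rewrite rvec_rl eqL memvf => h.
  have : (1 : R) = 0 by apply: h => // x xL; apply/eqP; exact: (allP allL x xL).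
  by move/eqP; rewrite oner_eq0.
split; first by rewrite sLe.
exists 0; split; first by left.
exists alpha; rewrite scale0r -spL; apply/eqP; rewrite eqEsubv; apply/andP; split;
  apply/span_subvP => x xin.
  apply: memv_span; rewrite mem_rcons in_cons; apply/orP; right.
  by apply: sf; rewrite sLe.
move: xin; rewrite mem_rcons in_cons => /orP[/eqP ->|/mapP[i _ ->]].
  exact: mem0v.
by apply: memv_span; apply: sL; apply: fs.
Qed.
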